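(* Let \(m\) be a positive integer that is not a perfect square. Let \(\alpha_1,\alpha_2\in\mathbb N[\sqrt m]\setminus\{0\}\) be such that \((\alpha_1,\alpha_2)\) spans \(1\) in \(\mathbb Z[\sqrt m]\), and suppose that at least one of \(\alpha_1,\alpha_2\) has rational part \(0\) or irrational part \(0\). Then \[Frob(\alpha_1,\alpha_2)=(\alpha_1-1)(\alpha_2-1)(1+\sqrt m)+\mathbb N[\sqrt m].\]
   Context: \(\mathbb N\) denotes the set of non-negative integers. \(\mathbb Z[\sqrt m]=\{u+v\sqrt m\mid u,v\in\mathbb Z\}\) and \(\mathbb N[\sqrt m]=\{u+v\sqrt m\mid u,v\in\mathbb N\}\); every element of \(\mathbb Z[\sqrt m]\) is uniquely \(u+v\sqrt m\) with \(u,v\in\mathbb Z\), and \(u\), \(v\) are its rational and irrational parts. A pair \((\alpha_1,\alpha_2)\) spans \(1\) in \(\mathbb Z[\sqrt m]\) if \(\lambda_1\alpha_1+\lambda_2\alpha_2=1\) for some \(\lambda_1,\lambda_2\in\mathbb Z[\sqrt m]\). \(SG(\alpha_1,\alpha_2)=\{\lambda_1\alpha_1+\lambda_2\alpha_2\mid \lambda_1,\lambda_2\in\mathbb N[\sqrt m]\}\) and \(Frob(\alpha_1,\alpha_2)=\{w\in\mathbb Z[\sqrt m]\mid w+\mathbb N[\sqrt m]\subseteq SG(\alpha_1,\alpha_2)\}\). *)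

(* Defs.v *)
(* Elements of Z[sqrt m] are represented by their (unique,
   since m is not a perfect square) coordinates (u, v) : int * int,
   meaning u + v sqrt m. *)
From mathcomp Require Import all_boot all_order all_algebra.
Set Implicit Arguments. Unset Strict Implicit. Unset Printing Implicit Defensive.
Import Order.TTheory GRing.Theory Num.Theory.
Local Open Scope ring_scope.

Definition zsqrt := (int * int)%type.

Definition zs_add (a b : zsqrt) : zsqrt := (a.1 + b.1, a.2 + b.2).
Definition zs_opp (a : zsqrt) : zsqrt := (- a.1, - a.2).
Definition zs_sub (a b : zsqrt) : zsqrt := zs_add a (zs_opp b).
Definition zs_mul (m : int) (a b : zsqrt) : zsqrt :=
  (a.1 * b.1 + m * (a.2 * b.2), a.1 * b.2 + a.2 * b.1).
Definition zs_one : zsqrt := (1, 0).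
Definition zs_zero : zsqrt := (0, 0).
Definition zs_sqrt : zsqrt := (0, 1).

Definition inN (a : zsqrt) : Prop := 0 <= a.1 /\ 0 <= a.2.

Definition spans1 (m : int) (a1 a2 : zsqrt) : Prop :=
  exists l1 l2 : zsqrt, zs_add (zs_mul m l1 a1) (zs_mul m l2 a2) = zs_one.

Definition inSG (m : int) (a1 a2 w : zsqrt) : Prop :=
  exists l1 l2 : zsqrt, inN l1 /\ inN l2 /\
    w = zs_add (zs_mul m l1 a1) (zs_mul m l2 a2).

Definition inFrob (m : int) (a1 a2 w : zsqrt) : Prop :=
  forall n : zsqrt, inN n -> inSG m a1 a2 (zs_add w n).

(* Main.v *)
Require Import Defs.
From mathcomp Require Import all_boot all_order all_algebra.
From mathcomp Require Import ring lra zify.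
Import Order.TTheory GRing.Theory Num.Theory.
Local Open Scope ring_scope.

Definition dv (d x : int) := exists k : int, x = k * d.

Lemma inN_mul (m : int) a b : 0 <= m -> inN a -> inN b -> inN (zs_mul m a b).
Proof.
case: a => a1 a2; case: b => b1 b2; rewrite /inN /zs_mul /= => hm [h1 h2] [h3 h4].
split; nia.
Qed.

Lemma divmod_dv (x d : int) : dv d (x - (x %% d)%Z).
Proof. exists (x %/ d)%Z; rewrite {1}(divz_eq x d); ring. Qed.

Section G.
Variables (m : int) (a1 a2 : zsqrt) (d1 d2 : int).
Hypotheses (hm : 0 <= m) (hd1 : 0 < d1) (hd2 : 0 < d2) (ha1 : inN a1) (ha2 : inN a2).
Hypothesis H1 : forall mu, dv d1 (zs_mul m mu a1).1 /\ dv d2 (zs_mul m mu a1).2.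
Hypothesis H2 : forall x, dv d1 x.1 -> dv d2 x.2 ->
   exists mu, x = zs_mul m mu a1 /\ (inN x -> inN mu).
Hypothesis Hs : spans1 m a1 a2.

Let s : zsqrt := (d1 - 1, d2 - 1).
Let T : zsqrt := zs_sub (zs_mul m s a2) s.

Lemma classL (de : zsqrt) : dv d1 (zs_mul m de a2).1 -> dv d2 (zs_mul m de a2).2 ->
  dv d1 de.1 /\ dv d2 de.2.
Proof.
move=> h1 h2; have [rho [Erho _]] := H2 _ h1 h2.
case: Hs => l1 [l2 E].
have -> : de = zs_mul m (zs_add (zs_mul m de l1) (zs_mul m l2 rho)) a1.
  clear h1 h2; move: E Erho; case: de => p q; case: l1 => u1 v1; case: l2 => u2 v2;
  case: rho => r1 r2; case: a1 => x1 y1; case: a2 => x2 y2.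
  rewrite /zs_add /zs_mul /zs_one /=; case=> e1 e2; case=> f1 f2.
  have g1 := congr1 (fun t => p * t) e1; have g2 := congr1 (fun t => q * t) e1;
  have g3 := congr1 (fun t => p * t) e2; have g4 := congr1 (fun t => q * t) e2;
  have g5 := congr1 (fun t => u2 * t) f1; have g6 := congr1 (fun t => v2 * t) f1;
  have g7 := congr1 (fun t => u2 * t) f2; have g8 := congr1 (fun t => v2 * t) f2;
  have g9 := congr1 (fun t => m * t) g4; have g10 := congr1 (fun t => m * t) g8;
  have g11 := congr1 (fun t => m * t) g6; have g12 := congr1 (fun t => m * t) g7;
  have g13 := congr1 (fun t => m * t) g2; have g14 := congr1 (fun t => m * t) g5;
  simpl in *; congr pair; lra.
exact: H1.
Qed.

Lemma keyid (x l1 l2 nu r : zsqrt) :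
  zs_add (zs_mul m l1 a1) (zs_mul m l2 a2) = zs_one ->
  zs_sub (zs_mul m x l2) r = zs_mul m nu a1 ->
  zs_sub x (zs_mul m r a2) = zs_mul m (zs_add (zs_mul m x l1) (zs_mul m nu a2)) a1.
Proof.
  case: x => p q; case: l1 => u1 v1; case: l2 => u2 v2; case: r => r1 r2;
  case: nu => n1 n2; case: a1 => x1 y1; case: a2 => x2 y2.
  rewrite /zs_sub /zs_opp /zs_add /zs_mul /zs_one /=; case=> e1 e2; case=> f1 f2.
  have g1 := congr1 (fun t => p * t) e1; have g2 := congr1 (fun t => q * t) e1;
  have g3 := congr1 (fun t => p * t) e2; have g4 := congr1 (fun t => q * t) e2;
  have g5 := congr1 (fun t => x2 * t) f1; have g6 := congr1 (fun t => y2 * t) f1;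
  have g7 := congr1 (fun t => x2 * t) f2; have g8 := congr1 (fun t => y2 * t) f2;
  have g9 := congr1 (fun t => m * t) g4; have g10 := congr1 (fun t => m * t) g8;
  have g11 := congr1 (fun t => m * t) g6; have g12 := congr1 (fun t => m * t) g7;
  have g13 := congr1 (fun t => m * t) g2; have g14 := congr1 (fun t => m * t) g5;
  simpl in *; congr pair; lra.
Qed.

Lemma hyL (n n' r : zsqrt) k1 k2 :
  inN n -> inN n' -> 0 <= r.1 -> 0 <= r.2 -> r.1 < d1 -> r.2 < d2 ->
  (zs_sub (zs_add (zs_add T n) n') (zs_mul m r a2)).1 = k1 * d1 ->
  (zs_sub (zs_add (zs_add T n) n') (zs_mul m r a2)).2 = k2 * d2 ->
  inN (zs_sub (zs_add (zs_add T n) n') (zs_mul m r a2)).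
Proof.
move=> hn hn' r1lo r2lo r1hi r2hi.
have hP : inN (zs_mul m (zs_sub s r) a2).
  apply: inN_mul => //; rewrite /inN /s /zs_sub /zs_add /zs_opp /=; split; lia.
move: hP hn hn' r1lo r2lo r1hi r2hi; rewrite /T /s.
case: r => p q; case: n => n1 n2; case: n' => n1' n2'; case: a2 => x2 y2.
rewrite /inN /zs_sub /zs_opp /zs_add /zs_mul /=.
move=> [h1 h2] [h3 h4] [h5 h6] i1 i2 i3 i4 H3 H4.
set A := (X in X = k1 * d1) in H3. set B := (X in X = k2 * d2) in H4.
have hA : 1 - d1 <= A by rewrite /A; lra.
have hB : 1 - d2 <= B by rewrite /B; lra.
rewrite H3 in hA; rewrite H4 in hB.
have : 0 <= k1 by nia.
have : 0 <= k2 by nia.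
rewrite -/A -/B H3 H4; split; nia.
Qed.

Lemma gen_back w : (exists n, inN n /\ w = zs_add T n) -> inFrob m a1 a2 w.
Proof.
case=> n [hn ->] n' hn'.
case: Hs => l1 [l2 E].
pose l0 := zs_mul m (zs_add (zs_add T n) n') l2.
pose r : zsqrt := ((l0.1 %% d1)%Z, (l0.2 %% d2)%Z).
have [nu [Enu _]] := H2 (zs_sub l0 r) (divmod_dv l0.1 d1) (divmod_dv l0.2 d2).
have Ey := keyid _ _ _ _ _ E Enu.
have [[k1 hk1] [k2 hk2]] := H1 (zs_add (zs_mul m (zs_add (zs_add T n) n') l1) (zs_mul m nu a2)).
rewrite -Ey in hk1 hk2.
have r1lo : 0 <= r.1 by apply: modz_ge0; lia.
have r2lo : 0 <= r.2 by apply: modz_ge0; lia.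
have r1hi : r.1 < d1 by apply: ltz_pmod.
have r2hi : r.2 < d2 by apply: ltz_pmod.
have hy := hyL _ _ _ _ _ hn hn' r1lo r2lo r1hi r2hi hk1 hk2.
have [mu [Emu hmu]] := H2 _ (ex_intro _ k1 hk1) (ex_intro _ k2 hk2).
exists mu, r; split; first exact: hmu.
split; first by rewrite /inN; split.
move: Emu; case: (zs_add (zs_add T n) n') => p q; case: (zs_mul m r a2) => u v;
case: (zs_mul m mu a1) => y z.
rewrite /zs_sub /zs_opp /zs_add /=; case=> e1 e2; congr pair; lra.
Qed.
Lemma mul_subl (a b c : zsqrt) :
  zs_mul m (zs_sub a b) c = zs_sub (zs_mul m a c) (zs_mul m b c).
Proof.
case: a => ? ?; case: b => ? ?; case: c => ? ?.
rewrite /zs_sub /zs_opp /zs_add /zs_mul /=; congr pair; ring.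
Qed.

Lemma gen_fwd w : inFrob m a1 a2 w -> exists n, inN n /\ w = zs_add T n.
Proof.
move=> hF.
pose S := zs_mul m s a2.
pose n' : zsqrt := (((S.1 - w.1) %% d1)%Z, ((S.2 - w.2) %% d2)%Z).
have n1lo : 0 <= n'.1 by apply: modz_ge0; lia.
have n2lo : 0 <= n'.2 by apply: modz_ge0; lia.
have n1hi : n'.1 < d1 by apply: ltz_pmod.
have n2hi : n'.2 < d2 by apply: ltz_pmod.
have [mu [la [hmu [hla Ex]]]] := hF n' (conj n1lo n2lo).
clear hF.
have [[k1 hk1] [k2 hk2]] := H1 mu.
pose q1 := ((S.1 - w.1) %/ d1)%Z. pose q2 := ((S.2 - w.2) %/ d2)%Z.
have e1 : S.1 - w.1 = q1 * d1 + n'.1 := divz_eq _ _.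
have e2 : S.2 - w.2 = q2 * d2 + n'.2 := divz_eq _ _.
clearbody q1 q2 n'.
have hmuP : inN (zs_mul m mu a1) by apply: inN_mul.
have [dd1 dd2] : dv d1 (zs_mul m (zs_sub la s) a2).1 /\ dv d2 (zs_mul m (zs_sub la s) a2).2.
  rewrite mul_subl -/S.
  move: Ex hk1 hk2 e1 e2.
  case: (zs_mul m la a2) => L1 L2; case: (zs_mul m mu a1) => P1 P2.
  case: (S) => S1 S2; case: (n') => n1 n2; case: w => w1 w2.
  rewrite /zs_sub /zs_opp /zs_add /=; case=> f1 f2 g1 g2 h1 h2.
  split; [exists (- q1 - k1) | exists (- q2 - k2)]; lra.
have [[j1 hj1] [j2 hj2]] := classL _ dd1 dd2.
have hls : inN (zs_sub la s).
  clear -hj1 hj2 hla hd1 hd2; move: hj1 hj2 hla; rewrite /s; case: la => p q; rewrite /inN /zs_sub /zs_opp /zs_add /=.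
  move=> h1 h2 [h3 h4].
  have : 0 <= j1 by nia.
  have : 0 <= j2 by nia.
  move=> *; split; nia.
have hP : inN (zs_mul m (zs_sub la s) a2) by apply: inN_mul.
rewrite mul_subl -/S in hP.
exists (zs_sub w T); split; last first.
  case: (w) => ? ?; case: (T) => ? ?; rewrite /zs_sub /zs_opp /zs_add /=; congr pair; ring.
move: Ex hP hmuP e1 e2 n1lo n2lo n1hi n2hi; rewrite /T -/S /s.
case: (zs_mul m la a2) => L1 L2; case: (zs_mul m mu a1) => P1 P2.
case: (S) => S1 S2; case: (n') => n1 n2; case: w => w1 w2.
rewrite /inN /zs_sub /zs_opp /zs_add /=; case=> f1 f2 [g1 g2] [h1 h2] i1 i2 *.
have : q1 <= 0 by nia.
have : q2 <= 0 by nia.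
move=> *; split; nia.
Qed.

Lemma gen w : inFrob m a1 a2 w <-> exists n, inN n /\ w = zs_add T n.
Proof. split; [exact: gen_fwd | exact: gen_back]. Qed.
End G.

Definition RHS m a1 a2 w := exists n : zsqrt, inN n /\
      w = zs_add (zs_mul m (zs_mul m (zs_sub a1 zs_one) (zs_sub a2 zs_one))
                                (zs_add zs_one zs_sqrt)) n.

Lemma main1 (m : int) a1 a2 : 0 < m -> inN a1 -> a1 <> zs_zero -> inN a2 ->
  spans1 m a1 a2 -> (a1.1 = 0 \/ a1.2 = 0) ->
  forall w, inFrob m a1 a2 w <-> RHS m a1 a2 w.
Proof.
move=> hm ha1 hn0 ha2 hs hz w.
have hm0 : 0 <= m by lia.
case: hz => hz.
- case: a1 ha1 hn0 hs hz => a b [ha hb] hn0 hs /= hz; subst a.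
  have hb0 : 0 < b.
    rewrite lt_neqAle hb andbT eq_sym; apply/eqP => e; apply: hn0; by rewrite e.
  have hd1 : 0 < m * b by nia.
  have ha1 : inN (0, b) by rewrite /inN /=; split; lia.
  have H2 : forall x : zsqrt, dv (m * b) x.1 -> dv b x.2 ->
      exists mu, x = zs_mul m mu (0, b) /\ (inN x -> inN mu).
    case=> x1 x2 /= [k1 e1] [k2 e2]; exists (k2, k1); split.
      by rewrite /zs_mul /= e1 e2; congr pair; ring.
    rewrite /inN /= e1 e2 => -[h1 h2]; split; nia.
  have H1 : forall mu, dv (m * b) (zs_mul m mu (0, b)).1 /\ dv b (zs_mul m mu (0, b)).2.
    case=> u v; rewrite /zs_mul /=; split; [exists v | exists u]; ring.
  rewrite (@gen m (0, b) a2 (m * b) b hm0 hd1 hb0 ha1 ha2 H1 H2 hs).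
  rewrite /RHS; split => -[n [hn e]]; exists n; split => //; rewrite e;
    case: a2 {ha2 hs e H1 H2} => x y; congr zs_add;
    rewrite /zs_sub /zs_opp /zs_add /zs_mul /zs_one /zs_sqrt /=; congr pair; ring.
- case: a1 ha1 hn0 hs hz => a b [ha hb] hn0 hs /= hz; subst b.
  have ha0 : 0 < a.
    rewrite lt_neqAle ha andbT eq_sym; apply/eqP => e; apply: hn0; by rewrite e.
  have ha1 : inN (a, 0) by rewrite /inN /=; split; lia.
  have H2 : forall x : zsqrt, dv a x.1 -> dv a x.2 ->
      exists mu, x = zs_mul m mu (a, 0) /\ (inN x -> inN mu).
    case=> x1 x2 /= [k1 e1] [k2 e2]; exists (k1, k2); split.
      by rewrite /zs_mul /= e1 e2; congr pair; ring.
    rewrite /inN /= e1 e2 => -[h1 h2]; split; nia.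
  have H1 : forall mu, dv a (zs_mul m mu (a, 0)).1 /\ dv a (zs_mul m mu (a, 0)).2.
    case=> u v; rewrite /zs_mul /=; split; [exists u | exists v]; ring.
  rewrite (@gen m (a, 0) a2 a a hm0 ha0 ha0 ha1 ha2 H1 H2 hs).
  rewrite /RHS; split => -[n [hn e]]; exists n; split => //; rewrite e;
    case: a2 {ha2 hs e H1 H2} => x y; congr zs_add;
    rewrite /zs_sub /zs_opp /zs_add /zs_mul /zs_one /zs_sqrt /=; congr pair; ring.
Qed.

Lemma zs_addC (a b : zsqrt) : zs_add a b = zs_add b a.
Proof. case: a => ? ?; case: b => ? ?; rewrite /zs_add /=; congr pair; ring. Qed.

Lemma zs_mulC m (a b : zsqrt) : zs_mul m a b = zs_mul m b a.
Proof. case: a => ? ?; case: b => ? ?; rewrite /zs_mul /=; congr pair; ring. Qed.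

Lemma frob_sym m a1 a2 w : inFrob m a1 a2 w -> inFrob m a2 a1 w.
Proof.
move=> h n hn; have [l1 [l2 [h1 [h2 e]]]] := h n hn.
by exists l2, l1; split => //; split => //; rewrite e zs_addC.
Qed.

Lemma spans_sym m a1 a2 : spans1 m a1 a2 -> spans1 m a2 a1.
Proof. by case=> l1 [l2 e]; exists l2, l1; rewrite zs_addC. Qed.

Lemma RHS_sym m a1 a2 w : RHS m a1 a2 w -> RHS m a2 a1 w.
Proof. by rewrite /RHS (zs_mulC m (zs_sub a1 zs_one)). Qed.

Theorem corollary3 (m : nat) (a1 a2 : zsqrt) :
  (0 < m)%N ->
  (forall k : nat, (k * k)%N <> m) ->
  inN a1 -> a1 <> zs_zero ->
  inN a2 -> a2 <> zs_zero ->
  spans1 (m%:Z) a1 a2 ->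
  (a1.1 = 0 \/ a1.2 = 0 \/ a2.1 = 0 \/ a2.2 = 0) ->
  forall w : zsqrt,
    inFrob (m%:Z) a1 a2 w <->
    exists n : zsqrt, inN n /\
      w = zs_add (zs_mul (m%:Z) (zs_mul (m%:Z) (zs_sub a1 zs_one) (zs_sub a2 zs_one))
                                (zs_add zs_one zs_sqrt)) n.
Proof.
move=> hm _ ha1 hn1 ha2 hn2 hs hz w.
have hmz : 0 < m%:Z by rewrite ltz_nat.
change (inFrob m a1 a2 w <-> RHS m a1 a2 w).
case: hz => [h|[h|h]].
- exact: (@main1 m%:Z a1 a2 hmz ha1 hn1 ha2 hs (or_introl h) w).
- exact: (@main1 m%:Z a1 a2 hmz ha1 hn1 ha2 hs (or_intror h) w).
- have := @main1 m%:Z a2 a1 hmz ha2 hn2 ha1 (@spans_sym _ _ _ hs) h w.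
  case=> HA HB; split => H0.
  + by apply: RHS_sym; apply: HA; apply: frob_sym.
  + by apply: frob_sym; apply: HB; apply: RHS_sym.
Qed.
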